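(* Let $G$ be a topological group, let $\mathcal{Y}$ be a Hausdorff locally convex space, let $n\ge 1$, and let $\phi\in\mathcal{LUC}_{\rm loc}^n(G,\mathcal{Y})$. Then: (1) For all $g\in G$, $X\in\mathfrak{L}(G)$ and $t\in\mathbb{R}$ one can write $$\phi(gX(t))=\sum_{j=0}^n\frac{t^j}{j!}((D^\lambda_X)^j\phi)(g)+t^n\chi_1(g,X,t),$$ where $\chi_1\colon G\times\mathfrak{L}(G)\times\mathbb{R}\to\mathcal{Y}$ is a function with $\lim_{t\to0}\chi_1(g,X,t)=0$. (2) For all $X_1,X_2\in\mathfrak{L}(G)$, $g\in G$, $t\in\mathbb{R}$ one can write $$\phi(gX_1(t)X_2(t))=\phi(g)+t\big((D^\lambda_{X_1}\phi)(g)+(D^\lambda_{X_2}\phi)(g)\big)+t\chi_2(g,X_1,X_2,t),$$ where $\chi_2\colon G\times\mathfrak{L}(G)\times\mathfrak{L}(G)\times\mathbb{R}\to\mathcal{Y}$ is a function with $\lim_{t\to0}\chi_2(g,X_1,X_2,t)=0$. Moreover, for every $g_0\in G$ (and fixed $X$, respectively fixed $X_1,X_2$) there exists a neighborhood $V_0$ of $g_0$ such that both limits $\lim_{t\to0}\chi_1(g,X,t)=0$ and $\lim_{t\to0}\chi_2(g,X_1,X_2,t)=0$ hold uniformly for $g\in V_0$.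
   Context: All topological groups and locally convex spaces are Hausdorff. $\mathfrak{L}(G)$ denotes the set of one-parameter subgroups of $G$, i.e. continuous homomorphisms $X\colon(\mathbb{R},+)\to G$. For $\phi\colon G\to\mathcal{Y}$, $X\in\mathfrak{L}(G)$, $g\in G$, set $(D^\lambda_X\phi)(g)=\lim_{t\to0}\frac{\phi(gX(t))-\phi(g)}{t}$ whenever the limit exists. $\mathcal{LUC}_{\rm loc}(G,\mathcal{Y})$ is the set of all $\phi\colon G\to\mathcal{Y}$ such that every $g_0\in G$ has a neighborhood $V$ on which $\phi$ is left uniformly continuous: for every neighborhood $U$ of $0\in\mathcal{Y}$ there is a neighborhood $W$ of $\mathbf{1}\in G$ such that $x,y\in V$, $x^{-1}y\in W$ imply $\phi(x)-\phi(y)\in U$. $\mathcal{LUC}^1_{\rm loc}(G,\mathcal{Y})$ is the set of $\phi\in\mathcal{LUC}_{\rm loc}(G,\mathcal{Y})$ such that $D^\lambda_X\phi(g)$ exists for all $X\in\mathfrak{L}(G)$, $g\in G$, and $D^\lambda_X\phi\in\mathcal{LUC}_{\rm loc}(G,\mathcal{Y})$ for every $X$; inductively, $\mathcal{LUC}^n_{\rm loc}(G,\mathcal{Y})$ is the set of $\phi\in\mathcal{LUC}^{n-1}_{\rm loc}(G,\mathcal{Y})$ such that all iterated derivatives $D^\lambda_{X_1}(D^\lambda_{X_2}\cdots(D^\lambda_{X_n}\phi)\cdots)$ exist everywhere and belong to $\mathcal{LUC}_{\rm loc}(G,\mathcal{Y})$ for all $X_1,\dots,X_n\in\mathfrak{L}(G)$.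 $(D^\lambda_X)^j$ denotes the $j$-fold iterate, $(D^\lambda_X)^0\phi=\phi$. *)

(* Defs.v *)
From HB Require Import structures.
From mathcomp Require Import all_boot all_order all_algebra.
From mathcomp Require Import all_classical all_reals all_analysis.
Set Implicit Arguments. Unset Strict Implicit. Unset Printing Implicit Defensive.
Import Order.TTheory GRing.Theory Num.Theory.
Import numFieldNormedType.Exports.
Local Open Scope classical_set_scope.
Local Open Scope ring_scope.

Definition is_topological_group (G : topologicalType)
    (mul : G -> G -> G) (inv : G -> G) (one : G) : Prop :=
  [/\ (forall x y z, mul x (mul y z) = mul (mul x y) z),
      (forall x, mul one x = x /\ mul x one = x),
      (forall x, mul (inv x) x = one /\ mul x (inv x) = one),
      continuous (fun p : G * G => mul p.1 p.2) &
      continuous inv /\ hausdorff_space G].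

Definition one_param_subgroup (R : realType) (G : topologicalType)
    (mul : G -> G -> G) (X : R -> G) : Prop :=
  continuous X /\ (forall s t : R, X (s + t) = mul (X s) (X t)).

Section Defs.
Context (R : realType) (G : topologicalType) (Y : tvsType R).
Context (mul : G -> G -> G) (inv : G -> G) (one : G).

Definition ldiffq (phi : G -> Y) (X : R -> G) (g : G) : R -> Y :=
  fun t => t^-1 *: (phi (mul g (X t)) - phi g).

Definition lderivable (phi : G -> Y) (X : R -> G) (g : G) : Prop :=
  exists l : Y, ldiffq phi X g @ (0 : R)^' --> l.

(* (the limit is unique since Y is Hausdorff; xget 0 is how [lim] is defined) *)
Definition Dl (phi : G -> Y) (X : R -> G) : G -> Y :=
  fun g => xget (0 : Y) (fun l : Y => ldiffq phi X g @ (0 : R)^' --> l).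

Definition iterDl (Xs : seq (R -> G)) (phi : G -> Y) : G -> Y :=
  foldr (fun X psi => Dl psi X) phi Xs.

Definition Dl_pow (j : nat) (X : R -> G) (phi : G -> Y) : G -> Y :=
  iterDl (nseq j X) phi.

Definition luc_on (V : set G) (phi : G -> Y) : Prop :=
  forall U : set Y, nbhs (0 : Y) U ->
    exists2 W : set G, nbhs one W &
      forall x y, V x -> V y -> W (mul (inv x) y) -> U (phi x - phi y).

Definition LUC_loc (phi : G -> Y) : Prop :=
  forall g0 : G, exists2 V : set G, nbhs g0 V & luc_on V phi.

Fixpoint LUCn_loc (n : nat) (phi : G -> Y) : Prop :=
  match n with
  | 0 => LUC_loc phi
  | k.+1 => LUCn_loc k phi /\
      forall Xs : seq (R -> G), size Xs = k.+1 ->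
        (forall X, X \in Xs -> one_param_subgroup mul X) ->
        (forall g, lderivable (iterDl (behead Xs) phi) (head (fun _ => one) Xs) g)
        /\ LUC_loc (iterDl Xs phi)
  end.

End Defs.

(* Main.v *)
Require Import Defs.
From HB Require Import structures.
From mathcomp Require Import all_boot all_order all_algebra.
From mathcomp Require Import all_classical all_reals all_analysis.
Import Order.TTheory GRing.Theory Num.Theory.
Import numFieldNormedType.Exports.
Local Open Scope classical_set_scope.
Local Open Scope ring_scope.
From mathcomp Require Import ring lra.
Set Implicit Arguments. Unset Strict Implicit. Unset Printing Implicit Defensive.
Section TVS.
Context (R : realType) (Y : tvsType R).

Lemma cvgD_tvs T (F : set_system T) (FF : Filter F) (f g : T -> Y) a b :
  f @ F --> a -> g @ F --> b -> (fun x => f x + g x) @ F --> a + b.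
Proof.
move=> fa gb.
exact: (@continuous2_cvg _ _ _ _ _ _ f g (fun x y => x + y) a b (add_continuous (a, b))).
Qed.

Lemma cvgZ_tvs T (F : set_system T) (FF : Filter F) (f : T -> R) (g : T -> Y) (a : R) (b : Y) :
  f @ F --> a -> g @ F --> b -> (fun x => f x *: g x) @ F --> a *: b.
Proof.
move=> fa gb.
exact: (@continuous2_cvg _ (R^o : topologicalType) _ _ _ _ f g (fun x y => x *: y) a b (scale_continuous (a, b))).
Qed.

Lemma cvgN_tvs T (F : set_system T) (FF : Filter F) (f : T -> Y) a :
  f @ F --> a -> (fun x => - f x) @ F --> - a.
Proof.
move=> fa.
have -> : (fun x => - f x) = (fun x => (-1 : R) *: f x).
  by apply/funext => x; rewrite scaleN1r.
rewrite -[X in _ --> X]scaleN1r; apply: cvgZ_tvs => //; exact: cvg_cst.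
Qed.

Lemma cvgB_tvs T (F : set_system T) (FF : Filter F) (f g : T -> Y) a b :
  f @ F --> a -> g @ F --> b -> (fun x => f x - g x) @ F --> a - b.
Proof. by move=> fa gb; apply: cvgD_tvs => //; apply: cvgN_tvs. Qed.

Lemma nbhs0_split (U : set Y) : nbhs (0 : Y) U ->
  exists2 V : set Y, nbhs (0 : Y) V & forall x y, V x -> V y -> U (x + y).
Proof.
move=> U0.
have := @add_continuous Y (0, 0) U; rewrite /= addr0 => /(_ U0) [[A B]] /= [A0 B0] AB.
exists (A `&` B); first exact: filterI.
by move=> x y [Ax _] [_ By]; apply: (AB (x, y)).
Qed.

End TVS.
Section Convex.
Context (R : realType) (Y : tvsType R).

Definition cvx (B : set Y) := forall x y (l : R), B x -> B y -> 0 <= l -> l <= 1 ->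
  B (l *: x + (1 - l) *: y).

Lemma convex_cvx (b : set Y) : convex_set (b : set (convex_lmodType Y)) -> cvx b.
Proof.
move=> cb x y l bx hy l0 l1.
have := cb x y (Itv01 l0 l1) (mem_set bx) (mem_set hy).
by rewrite inE.
Qed.

Lemma good_nbhs (U : set Y) : nbhs (0 : Y) U -> exists B : set Y,
  [/\ B `<=` U, open B, B 0, cvx B & forall x, B x -> B (- x)].
Proof.
move=> U0.
case: (@locally_convex R Y) => Bs Bsc [Bso Bsb].
have := Bsb 0 U U0 => -[b [Bsb0 b0] bU].
have bo := Bso b Bsb0.
have bc : cvx b.
  move=> x y l bx hy l0 l1.
  have := Bsc b (mem_set Bsb0) x y (Itv01 l0 l1) (mem_set bx) (mem_set hy).
  by rewrite inE.
exists (b `&` [set x | b (- x)]); split.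
- by move=> x [bx _]; exact: bU.
- apply: openI => //.
  have -> : [set x : Y | b (- x)] = (-%R) @^-1` b by [].
  apply: open_comp => // x _; exact: opp_continuous.
- by split => //=; rewrite oppr0.
- move=> x y l [bx bnx] [hy bny] l0 l1; split; first exact: bc.
  by rewrite /= opprD -!scalerN; apply: bc.
- by move=> x [bx bnx]; split => //=; rewrite opprK.
Qed.

Lemma cvx_balanced (B : set Y) : cvx B -> B 0 -> (forall x, B x -> B (- x)) ->
  forall x (l : R), B x -> `|l| <= 1 -> B (l *: x).
Proof.
move=> Bc B0 BN x l Bx l1.
have H : forall m (z : Y), B z -> 0 <= m -> m <= 1 -> B (m *: z).
  move=> m z Bz m0 m1; have := Bc z 0 m Bz B0 m0 m1.
  by rewrite scaler0 addr0.
have [l0|l0] := leP 0 l.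
  by apply: H => //; rewrite -(ger0_norm l0).
rewrite -[l]opprK scaleNr -scalerN; apply: H; first exact: BN.
- by rewrite oppr_ge0 ltW.
- by rewrite -(ltr0_norm l0).
Qed.
End Convex.
Section MVI.
Context (R : realType) (Y : tvsType R) (B : set Y) (Bc : cvx B) (b0 : Y) (Bb0 : B b0).

Definition Pt (c : R -> Y) (u v : R) := exists2 w, B w & c v - c u = (v - u) *: w.

Lemma Pt_refl c u : Pt c u u.
Proof. by exists b0 => //; rewrite !subrr scale0r. Qed.

Lemma Pt_trans c u v z : u <= v -> v <= z -> Pt c u v -> Pt c v z -> Pt c u z.
Proof.
move=> uv vz [w1 Bw1 e1] [w2 Bw2 e2].
have [zu|zu] := eqVneq z u.
  have vu : v = u by apply/eqP; rewrite eq_le uv -zu vz.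
  by exists w2 => //; move: e2; rewrite zu vu.
have zu0 : 0 < z - u by rewrite subr_gt0 lt_neqAle eq_sym zu (le_trans uv vz).
set l := (v - u) / (z - u).
have l0 : 0 <= l by apply: divr_ge0; [rewrite subr_ge0 | exact: ltW].
have l1 : l <= 1 by rewrite ler_pdivrMr // mul1r lerD2r.
exists (l *: w1 + (1 - l) *: w2); first exact: Bc.
have -> : c z - c u = (c z - c v) + (c v - c u) by rewrite addrA subrK.
rewrite e1 e2 scalerDr !scalerA addrC; congr (_ *: _ + _ *: _).
  by rewrite /l mulrC -mulrA mulVf ?mulr1 // gt_eqF.
rewrite mulrBr mulr1 /l mulrC -mulrA mulVf ?mulr1 ?gt_eqF //.
by rewrite opprB addrA subrK.
Qed.

Lemma mvi_pos c a : 0 <= a ->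
  (forall s, 0 <= s -> s <= a -> exists2 d : R, 0 < d &
     forall h, 0 <= h -> h < d -> Pt c s (s + h) /\ Pt c (s - h) s) ->
  Pt c 0 a.
Proof.
move=> a0 H.
pose A := [set x : R | [/\ 0 <= x, x <= a & Pt c 0 x]].
have A0 : A 0 by split => //; exact: Pt_refl.
have Aub : ubound A a by move=> x [].
have hs : has_sup A by split; [exists 0 | exists a].
set s := sup A. have sE : s = sup A by []. clearbody s.
have s0 : 0 <= s by rewrite sE; apply: sup_upper_bound.
have sa : s <= a by rewrite sE; apply: ge_sup => //; exists 0.
have [d d0 Hd] := H s s0 sa.
have [x [x0 xa Px] sx] := sup_adherent d0 hs. rewrite -sE in sx.
have xs : x <= s by rewrite sE; apply: sup_upper_bound.
have Pxs : Pt c x s.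
  have h1 : 0 <= s - x by lra.
  have h2 : s - x < d by lra.
  have [_] := Hd (s - x) h1 h2.
  by rewrite opprB addrC subrK.
have Ps : Pt c 0 s by apply: (Pt_trans x0 xs).
have [ad|da] := lerP a (s + d / 2).
  have h1 : 0 <= a - s by lra.
  have h2 : a - s < d by lra.
  have [Psa _] := Hd (a - s) h1 h2.
  rewrite addrC subrK in Psa.
  exact: (Pt_trans s0 sa).
exfalso.
have h1 : 0 <= d / 2 by lra.
have h2 : d / 2 < d by lra.
have [Psd _] := Hd (d / 2) h1 h2.
have : A (s + d / 2).
  split; [lra | lra | ].
  apply: (Pt_trans s0 _ Ps Psd); lra.
move/(sup_upper_bound hs); rewrite -sE; lra.
Qed.

End MVI.
Lemma near0P (R : realType) (P : R -> Prop) : (\forall h \near (0:R)^', P h) <->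
  exists2 d : R, 0 < d & forall h, h != 0 -> `|h| < d -> P h.
Proof.
split.
  move=> /nbhs_ballP [d d0 Hd]; exists d => // h h0 hd; apply: Hd => //.
  by rewrite /ball /= sub0r normrN.
move=> [d d0 Hd]; apply/nbhs_ballP; exists d => // h; rewrite /ball /= sub0r normrN.
by move=> hd h0; apply: Hd.
Qed.
Section MVI2.
Context (R : realType) (Y : tvsType R) (B : set Y) (Bc : cvx B) (B0 : B 0)
  (BN : forall x, B x -> B (- x)).

Lemma Pt_step (c : R -> Y) (s : R) :
  (\forall h \near (0:R)^', B (h^-1 *: (c (s + h) - c s))) ->
  exists2 d : R, 0 < d & forall h, 0 <= h -> h < d -> Pt B c s (s + h) /\ Pt B c (s - h) s.
Proof.
move=> /near0P [d d0 Hd]; exists d => // h h0 hd.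
have [->|hn0] := eqVneq h 0.
  by rewrite addr0 subr0; split; apply: (Pt_refl B0).
have hlt : `|h| < d by rewrite ger0_norm.
split.
  exists (h^-1 *: (c (s + h) - c s)); first exact: Hd.
  by rewrite [s + h - s]addrC addKr scalerA mulfV // scale1r.
exists ((- h)^-1 *: (c (s + - h) - c s)).
  by apply: Hd; rewrite ?oppr_eq0 ?normrN.
have -> : s - (s - h) = h by rewrite opprB addrC subrK.
rewrite scalerA invrN mulrN mulfV // scaleN1r opprB.
done.
Qed.

Lemma mvi (c : R -> Y) (t : R) :
  (forall s, `|s| <= `|t| -> \forall h \near (0:R)^', B (h^-1 *: (c (s + h) - c s))) ->
  exists2 w, B w & c t - c 0 = t *: w.
Proof.
move=> H.
have [t0|t0] := leP 0 t.
  have := @mvi_pos R Y B Bc 0 B0 c t t0.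
  move=> /(_ _) [|w Bw e]; last by exists w => //; rewrite e subr0.
  move=> s s0 st; apply: Pt_step; apply: H.
  by rewrite !ger0_norm.
pose c' := fun s => c (- s).
have := @mvi_pos R Y B Bc 0 B0 c' (- t).
move=> /(_ _ _) [||w Bw e].
- by rewrite oppr_ge0 ltW.
- move=> s s0 st; apply: Pt_step.
  have := H (- s); rewrite normrN ger0_norm // ltr0_norm // => /(_ st).
  move=> /near0P [d d0 Hd]; apply/near0P; exists d => // h h0 hd.

  rewrite /c' /= opprD.
  have := Hd (- h); rewrite oppr_eq0 normrN => /(_ h0 hd) /BN.
  by rewrite invrN scaleNr opprK.
- exists (- w); first exact: BN.
  move: e; rewrite /c' /= oppr0 opprK addr0 => ->.
  by rewrite scaleNr scalerN.
Qed.
End MVI2.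
Lemma idexp (R : realType) (j : nat) (x : R) : (@id R ^+ j) x = x ^+ j.
Proof.
by rewrite exprfctE.
Qed.

Lemma pow_quot (R : realType) (s : R) (j : nat) :
  (fun h : R => h^-1 * ((s + h) ^+ j - s ^+ j)) @ (0:R)^' --> (j%:R * s ^+ j.-1).
Proof.
have D := @is_deriveX R R^o id j s 1 1 (is_derive_id s 1).
have Hd := @ex_derive _ _ _ _ _ _ _ D.
have Hv := @derive_val _ _ _ _ _ _ _ D.
move: Hd => /cvg_ex [l Hl].
have E : l = (j%:R * s ^+ j.-1)%:A by rewrite -Hv; apply/esym/cvg_lim.
move: Hl; rewrite E.
have -> : (j%:R * s ^+ j.-1)%:A = j%:R * s ^+ j.-1 :> R by rewrite /GRing.scale /= mulr1.
apply: cvg_trans; apply: near_eq_cvg; near=> h.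
rewrite /= /GRing.scale /= mulr1 addrC !idexp.
by rewrite addrC (addrC h).
Unshelve. all: by end_near.
Qed.
Lemma fact_coef (R : realType) (s : R) (i : nat) :
  (i.+1%:R * s ^+ i.+1.-1) / (i.+1`!)%:R = s ^+ i / (i`!)%:R.
Proof.
have h1 : (i.+1)%:R != 0 :> R by rewrite pnatr_eq0.
have h2 : (i`!)%:R != 0 :> R by rewrite pnatr_eq0 -lt0n fact_gt0.
rewrite factS natrM /=; field.
by rewrite h2 /= addrC natr1 h1.
Qed.

Section Poly.
Context (R : realType) (Y : tvsType R).

Lemma poly_quot (s : R) (m : nat) (v : nat -> Y) :
  (fun h : R => h^-1 *: (\sum_(j < m.+2) ((s + h) ^+ j / (j`!)%:R) *: v j
                         - \sum_(j < m.+2) (s ^+ j / (j`!)%:R) *: v j))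
  @ (0:R)^' --> \sum_(j < m.+1) (s ^+ j / (j`!)%:R) *: v j.+1.
Proof.
have -> : (fun h : R => h^-1 *: (\sum_(j < m.+2) ((s + h) ^+ j / (j`!)%:R) *: v j
                         - \sum_(j < m.+2) (s ^+ j / (j`!)%:R) *: v j)) =
   (fun h : R => \sum_(j < m.+2) ((h^-1 * ((s + h) ^+ j - s ^+ j)) / (j`!)%:R) *: v j).
  apply/funext => h; rewrite -sumrB scaler_sumr; apply: eq_bigr => j _.
  by rewrite -scalerBl scalerA mulrBr mulrBr mulrBl !mulrA.
have -> : \sum_(j < m.+1) (s ^+ j / (j`!)%:R) *: v j.+1 =
          \sum_(j < m.+2) ((j%:R * s ^+ j.-1) / (j`!)%:R) *: v j.
  rewrite [RHS]big_ord_recl /= mul0r mul0r scale0r add0r.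
  by apply: eq_bigr => i _; rewrite fact_coef.
apply: (@cvg_big Y) => //.
- exact: add_continuous.
- move=> j _; apply: cvgZ_tvs; last exact: cvg_cst.
  by apply: cvgMl; exact: pow_quot.
Qed.
End Poly.
Lemma subrBB (V : zmodType) (a b c d : V) : (a - c) - (b - d) = (a - b) - (c - d).
Proof. by rewrite !opprB !addrA addrAC (addrAC a) -(addrAC _ d). Qed.
Lemma zmod6 (V : zmodType) (u v w a b d : V) :
  u - w - (a + d) = (u - (v + b) + (b - d)) + (v - (w + a)).
Proof.
have -> : u - (v + b) + (b - d) = u - v - d by rewrite opprD addrA addrA subrK.
rewrite [- (w + a)]opprD [RHS]addrAC [u - v + _]addrA subrK.
by rewrite opprD !addrA.
Qed.
Section Main.
Context (R : realType) (G : topologicalType) (Y : tvsType R)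
  (mul : G -> G -> G) (inv : G -> G) (one : G)
  (HG : is_topological_group mul inv one).

Let mulA x y z : mul x (mul y z) = mul (mul x y) z.
Proof. by case: HG. Qed.
Let mul1g x : mul one x = x.
Proof. by case: HG => _ h; case: (h x). Qed.
Let mulg1 x : mul x one = x.
Proof. by case: HG => _ h; case: (h x). Qed.
Let mulVg x : mul (inv x) x = one.
Proof. by case: HG => _ _ h; case: (h x). Qed.
Let mul_cont : continuous (fun p : G * G => mul p.1 p.2).
Proof. by case: HG. Qed.

Lemma X0 (X : R -> G) : one_param_subgroup mul X -> X 0 = one.
Proof.
case=> _ hX; have e := hX 0 0; rewrite addr0 in e.
have : mul (inv (X 0)) (X 0) = mul (inv (X 0)) (mul (X 0) (X 0)) by rewrite -e.
by rewrite mulA mulVg mul1g.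
Qed.

Lemma mulX g (X : R -> G) s h : one_param_subgroup mul X ->
  mul g (X (s + h)) = mul (mul g (X s)) (X h).
Proof. by case=> _ hX; rewrite hX mulA. Qed.

Lemma Xnear (X : R -> G) (W : set G) : one_param_subgroup mul X -> nbhs one W ->
  \forall t \near (0:R)^', W (X t).
Proof.
move=> hX W1; have := (proj1 hX) 0 W; rewrite (X0 hX) => /(_ W1).
move=> /nbhs_ballP [d d0 Hd]; apply/near0P; exists d => // h _ hd.
by apply: Hd; rewrite /ball /= sub0r normrN.
Qed.

Lemma mul_split (g0 : G) (V : set G) : nbhs g0 V -> exists V0 : set G, exists W : set G,
  [/\ nbhs g0 V0, nbhs one W, V0 `<=` V & forall g w, V0 g -> W w -> V (mul g w)].
Proof.
move=> V0; have := @mul_cont (g0, one) V; rewrite /= mulg1 => /(_ V0).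
move=> H.
have [[A B] /= [A0 B0] AB] : filter_prod (nbhs g0) (nbhs one) ((fun p : G * G => mul p.1 p.2) @^-1` V) by exact: H.
pose Z := A `&` V; exists Z; exists B; split => //; first exact: filterI.
- by move=> x [].
- by move=> g w [Ag _] Bw; apply: (AB (g, w)).
Qed.

Lemma Dl_cvg (psi : G -> Y) (X : R -> G) (g : G) : lderivable mul psi X g ->
  ldiffq mul psi X g @ (0:R)^' --> Dl mul psi X g.
Proof. by move=> h; rewrite /Dl; apply: (xgetPex 0 h). Qed.

Lemma Dl_pow_S j (X : R -> G) (psi : G -> Y) :
  Dl_pow mul j X (Dl mul psi X) = Dl_pow mul j.+1 X psi.
Proof.
rewrite /Dl_pow /iterDl; elim: j => [//|j IH] /=.
by rewrite IH.
Qed.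

Definition rem (n : nat) (psi : G -> Y) (X : R -> G) (g : G) (t : R) : Y :=
  psi (mul g (X t)) - \sum_(j < n.+1) ((t ^+ j / (j`!)%:R) *: Dl_pow mul j X psi g).

Lemma rem0 n psi X g : one_param_subgroup mul X -> rem n psi X g 0 = 0.
Proof.
move=> hX; rewrite /rem (X0 hX) mulg1 big_ord_recl /= expr0 div1r invr1 scale1r.
rewrite big1 ?addr0 ?subrr // => i _.
by rewrite expr0n /= mul0r scale0r.
Qed.

Definition THyp n (psi : G -> Y) (X : R -> G) :=
  (forall j, (j <= n)%N -> LUC_loc mul inv one (Dl_pow mul j X psi)) /\
  (forall j, (j < n)%N -> forall g, lderivable mul (Dl_pow mul j X psi) X g).

Lemma THyp_S n psi X : THyp n.+1 psi X -> THyp n (Dl mul psi X) X.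
Proof.
move=> [H1 H2]; split => j hj; rewrite Dl_pow_S; [exact: H1 | exact: H2].
Qed.

Lemma taylor_base (psi : G -> Y) (X : R -> G) : one_param_subgroup mul X ->
  LUC_loc mul inv one psi -> forall g0 : G, exists2 V0 : set G, nbhs g0 V0 &
  forall U : set Y, nbhs (0 : Y) U ->
    \forall t \near (0:R)^', forall g, V0 g -> U (psi (mul g (X t)) - psi g).
Proof.
move=> hX Hpsi g0.
have [V V1 Vluc] := Hpsi g0.
have [V0 [W' [V00 W'1 V0V V0W]]] := mul_split V1.
exists V0 => // U U0.
have [W W1 HW] := Vluc _ (nbhs0N U0).
near=> t => g Vg.
have Wt : W' (X t) by near: t; exact: Xnear.
have Wt2 : W (X t) by near: t; exact: Xnear.
have := HW g (mul g (X t)) (V0V _ Vg) (V0W _ _ Vg Wt).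
rewrite mulA mulVg mul1g => /(_ Wt2) [u Uu e].
by have -> : psi (mul g (X t)) - psi g = u by rewrite -[u]opprK e opprB.
Unshelve. all: by end_near.
Qed.


Lemma taylor_unif n : forall (psi : G -> Y) (X : R -> G), one_param_subgroup mul X ->
  THyp n psi X -> forall g0 : G, exists2 V0 : set G, nbhs g0 V0 &
  forall U : set Y, nbhs (0 : Y) U ->
    \forall t \near (0:R)^', forall g, V0 g -> U (t ^- n *: rem n psi X g t).
Proof.
elim: n => [|n IH] psi X hX [H1 H2] g0.
  have [V0 V00 HV] := taylor_base hX (H1 0%N (leqnn 0)) g0.
  exists V0 => // U U0; have := HV U U0; apply: filterS => t Ht g Vg.
  rewrite expr0 invr1 scale1r /rem big_ord1 expr0 divr1 scale1r.
  exact: Ht.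
have [V0 V00 HV] := IH (Dl mul psi X) X hX (THyp_S (conj H1 H2)) g0.
exists V0 => // U U0.
have [B [BU Bo B0 Bc BN]] := good_nbhs U0.
have /near0P [d d0 Hd] := HV B (open_nbhs_nbhs (conj Bo B0)).
apply/near0P; exists d => // t t0 td g Vg.
pose c := fun s => t ^- n *: rem n.+1 psi X g s.
have [w Bw e] : exists2 w, B w & c t - c 0 = t *: w.
  apply: (@mvi R Y B Bc B0 BN c t) => s st.
  set L := t ^- n *: rem n (Dl mul psi X) X g s.
  have BL : B L.
    have [s00|s0] := eqVneq s 0; first by rewrite /L s00 rem0 // scaler0.
    have sd : `|s| < d by apply: le_lt_trans st td.
    have Bs := Hd s s0 sd g Vg.
    have -> : L = (t ^- n * s ^+ n) *: (s ^- n *: rem n (Dl mul psi X) X g s).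
      by rewrite /L scalerA mulfK // expf_neq0.
    apply: cvx_balanced => //.
    have -> : t ^- n * s ^+ n = (s / t) ^+ n by rewrite exprMn exprVn mulrC.
    rewrite normrX exprn_ile1 //.
    by rewrite normrM normfV ler_pdivrMr ?mul1r // normr_gt0.
  have Hc : (fun h : R => h^-1 *: (c (s + h) - c s)) @ (0:R)^' --> L.
    pose P u := \sum_(j < n.+2) (u ^+ j / (j`!)%:R) *: Dl_pow mul j X psi g.
    have -> : (fun h : R => h^-1 *: (c (s + h) - c s)) = (fun h : R =>
       t ^- n *: (ldiffq mul psi X (mul g (X s)) h - h^-1 *: (P (s + h) - P s))).
      apply/funext => h; rewrite /c /rem /ldiffq -scalerBr scalerA mulrC -scalerA.
      by rewrite -scalerBr (mulX _ _ _ hX) subrBB.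
    rewrite /L; apply: cvgZ_tvs; first exact: cvg_cst.
    apply: cvgB_tvs.
      by apply: Dl_cvg; exact: (H2 0%N).
    have -> : \sum_(j < n.+1) (s ^+ j / (j`!)%:R) *: Dl_pow mul j X (Dl mul psi X) g =
      \sum_(j < n.+1) (s ^+ j / (j`!)%:R) *: Dl_pow mul j.+1 X psi g.
      by apply: eq_bigr => j _; rewrite Dl_pow_S.
    exact: (@poly_quot R Y s n (fun j => Dl_pow mul j X psi g)).
  exact: (Hc B (open_nbhs_nbhs (conj Bo BL))).
move: e; rewrite /c rem0 // scaler0 subr0 => e.
apply: BU.
by rewrite exprS invfM -scalerA e scalerA mulVf // scale1r.
Qed.


Lemma LUCn_le n m (psi : G -> Y) : (m <= n)%N ->
  LUCn_loc mul inv one n psi -> LUCn_loc mul inv one m psi.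
Proof.
elim: n m => [|n IH] m.
  by rewrite leqn0 => /eqP ->.
rewrite leq_eqVlt => /orP [/eqP -> //|]; rewrite ltnS => mn [H _]; exact: IH.
Qed.

Lemma LUCn_THyp n (psi : G -> Y) (X : R -> G) : one_param_subgroup mul X ->
  LUCn_loc mul inv one n psi -> THyp n psi X.
Proof.
move=> hX Hn; split.
  case=> [|j] jn.
    by have := LUCn_le (leq0n n) Hn.
  have := LUCn_le jn Hn => -[_ /(_ (nseq j.+1 X))].
  rewrite size_nseq => /(_ erefl) [].
    by move=> Z; rewrite mem_nseq => /andP [_ /eqP ->].
  by [].
move=> j jn g.
have := LUCn_le jn Hn => -[_ /(_ (nseq j.+1 X))].
rewrite size_nseq => /(_ erefl) [].
  by move=> Z; rewrite mem_nseq => /andP [_ /eqP ->].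
by move=> /(_ g).
Qed.

Lemma rem1E (psi : G -> Y) (X : R -> G) g t :
  rem 1 psi X g t = psi (mul g (X t)) - (psi g + t *: Dl mul psi X g).
Proof. by rewrite /rem big_ord_recl big_ord1 /= expr0 expr1 !divr1 !scale1r. Qed.

Lemma part1_eq n (psi : G -> Y) (X : R -> G) g t : (0 < n)%N -> one_param_subgroup mul X ->
  psi (mul g (X t)) = \sum_(j < n.+1) ((t ^+ j / (j`!)%:R) *: Dl_pow mul j X psi g)
         + t ^+ n *: (t ^- n *: rem n psi X g t).
Proof.
move=> hn hX.
have [->|t0] := eqVneq t 0.
  have E := rem0 n psi g hX; rewrite /rem in E.
  by rewrite rem0 // !scaler0 addr0; apply/eqP; rewrite -subr_eq0 E.
by rewrite scalerA mulfV ?expf_neq0 // scale1r /rem addrC subrK.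
Qed.

Lemma part2_eq (psi : G -> Y) (X1 X2 : R -> G) g t :
  one_param_subgroup mul X1 -> one_param_subgroup mul X2 ->
  psi (mul (mul g (X1 t)) (X2 t)) =
    psi g + t *: (Dl mul psi X1 g + Dl mul psi X2 g) +
    t *: (t^-1 *: (psi (mul (mul g (X1 t)) (X2 t)) - psi g
                   - t *: (Dl mul psi X1 g + Dl mul psi X2 g))).
Proof.
move=> h1 h2.
have [->|t0] := eqVneq t 0.
  by rewrite (X0 h1) (X0 h2) !mulg1 !scale0r !addr0.
rewrite scalerA mulfV // scale1r.
by rewrite -[X in _ = _ + X]addrA -opprD [RHS]addrC subrK.
Qed.

Lemma part2_unif n (phi : G -> Y) : (0 < n)%N -> LUCn_loc mul inv one n phi ->
  forall (g0 : G) (X1 X2 : R -> G), one_param_subgroup mul X1 -> one_param_subgroup mul X2 ->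
  exists2 V0 : set G, nbhs g0 V0 &
    forall U : set Y, nbhs (0 : Y) U ->
      \forall t \near (0:R)^', forall g, V0 g ->
        U (t^-1 *: (phi (mul (mul g (X1 t)) (X2 t)) - phi g
                   - t *: (Dl mul phi X1 g + Dl mul phi X2 g))).
Proof.
move=> hn hphi g0 X1 X2 hX1 hX2.
have H1 := LUCn_le hn hphi.
have T1 := LUCn_THyp hX1 H1.
have T2 := LUCn_THyp hX2 H1.
have [Va Va0 HVa] := taylor_unif hX1 T1 g0.
have [Vb Vb0 HVb] := taylor_unif hX2 T2 g0.
have [Vc Vc0 HVc] := taylor_base hX1 (proj1 T2 1%N (leqnn 1)) g0.
have [Vd [W' [Vd0 W'1 VdVb VdW]]] := mul_split Vb0.
pose V0 := Va `&` Vc `&` Vd.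
exists V0; first by apply: filterI; [apply: filterI|].
move=> U U0.
have [U1 U10 HU1] := nbhs0_split U0.
have [U2 U20 HU2] := nbhs0_split U10.
near=> t => g [[Vag Vcg] Vdg].
have t0 : t != 0 by near: t; apply/near0P; exists 1 => // h h0 _.
have Ha : forall g, Va g -> U1 (t ^- 1 *: rem 1 phi X1 g t) by near: t; exact: HVa.
have Hb : forall g, Vb g -> U2 (t ^- 1 *: rem 1 phi X2 g t) by near: t; exact: HVb.
have Hc : forall g, Vc g -> U2 (Dl mul phi X2 (mul g (X1 t)) - Dl mul phi X2 g).
  by near: t; exact: HVc.
have Wt : W' (X1 t) by near: t; exact: Xnear.
rewrite expr1 in Ha Hb.
have -> : t^-1 *: (phi (mul (mul g (X1 t)) (X2 t)) - phi g
                   - t *: (Dl mul phi X1 g + Dl mul phi X2 g)) =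
  (t^-1 *: rem 1 phi X2 (mul g (X1 t)) t
   + (Dl mul phi X2 (mul g (X1 t)) - Dl mul phi X2 g))
  + t^-1 *: rem 1 phi X1 g t.
  rewrite !rem1E !scalerBr !scalerDr !scalerA !(mulVf t0) !scale1r.
  exact: zmod6.
apply: HU1; last exact: Ha.
apply: HU2; last exact: Hc.
apply: Hb; exact: VdW.
Unshelve. all: by end_near.
Qed.

End Main.

Unset Implicit Arguments.

Theorem proposition2p2 (R : realType) (G : topologicalType) (Y : tvsType R)
  (mul : G -> G -> G) (inv : G -> G) (one : G)
  (HG : is_topological_group mul inv one) (HY : hausdorff_space Y)
  (n : nat) (hn : (0 < n)%N) (phi : G -> Y)
  (hphi : LUCn_loc mul inv one n phi) :
  (exists chi1 : G -> (R -> G) -> R -> Y,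
    (forall g X t, one_param_subgroup mul X ->
       phi (mul g (X t)) =
         \sum_(j < n.+1) ((t ^+ j / (j`!)%:R) *: Dl_pow mul j X phi g)
         + t ^+ n *: chi1 g X t) /\
    (forall g X, one_param_subgroup mul X ->
       chi1 g X t @[t --> (0 : R)^'] --> (0 : Y)) /\
    (forall (g0 : G) (X : R -> G), one_param_subgroup mul X ->
       exists2 V0 : set G, nbhs g0 V0 &
         forall U : set Y, nbhs (0 : Y) U ->
           \forall t \near (0 : R)^', forall g, V0 g -> U (chi1 g X t))) /\
  (exists chi2 : G -> (R -> G) -> (R -> G) -> R -> Y,
    (forall g X1 X2 t, one_param_subgroup mul X1 -> one_param_subgroup mul X2 ->
       phi (mul (mul g (X1 t)) (X2 t)) =
         phi g + t *: (Dl mul phi X1 g + Dl mul phi X2 g) + t *: chi2 g X1 X2 t) /\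
    (forall g X1 X2, one_param_subgroup mul X1 -> one_param_subgroup mul X2 ->
       chi2 g X1 X2 t @[t --> (0 : R)^'] --> (0 : Y)) /\
    (forall (g0 : G) (X1 X2 : R -> G), one_param_subgroup mul X1 -> one_param_subgroup mul X2 ->
       exists2 V0 : set G, nbhs g0 V0 &
         forall U : set Y, nbhs (0 : Y) U ->
           \forall t \near (0 : R)^', forall g, V0 g -> U (chi2 g X1 X2 t))).
Proof.
split.
  exists (fun g X t => t ^- n *: rem mul n phi X g t); split; [|split].
  - by move=> g X t hX; apply: (part1_eq HG).
  - move=> g X hX U U0.
    have [V0 V00 HV] := taylor_unif HG hX (LUCn_THyp hX hphi) g.
    have := HV U U0; apply: filterS => t Ht; exact: Ht g (nbhs_singleton V00).
  - by move=> g0 X hX; exact: (taylor_unif HG hX (LUCn_THyp hX hphi) g0).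
exists (fun g X1 X2 t => t^-1 *: (phi (mul (mul g (X1 t)) (X2 t)) - phi g
                   - t *: (Dl mul phi X1 g + Dl mul phi X2 g))); split; [|split].
- by move=> g X1 X2 t h1 h2; apply: (part2_eq HG).
- move=> g X1 X2 h1 h2 U U0.
  have [V0 V00 HV] := part2_unif HG hn hphi g h1 h2.
  have := HV U U0; apply: filterS => t Ht; exact: Ht g (nbhs_singleton V00).
- by move=> g0 X1 X2 h1 h2; exact: (part2_unif HG hn hphi g0 h1 h2).
Qed.
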